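(* There is an absolute constant $c>0$ such that for all $M,T\ge1$ there exist a bid grid $\mathcal B$, a valuation vector $\bm v$, and a distribution over sequences of competing bid vectors $(\bm b^t_-)_{t\in[T]}$ such that every (possibly randomized) bidding algorithm in the full information setting has expected discretized regret $\textsc{Regret}_{\mathcal B}\ge cM\sqrt T$; that is, $\textsc{Regret}_{\mathcal B}\in\Omega(M\sqrt T)$ under full information. Consequently the same lower bound holds in the bandit feedback setting.
   Context: Setting: an agent demands up to $M$ units in each of $T$ rounds of a multi-unit pay-as-bid auction, with valuation $\bm v\in[0,1]^M$, $v_1\ge\dots\ge v_M$, and bids in a finite grid $\mathcal B\subset[0,1]$; $\mathcal B^{+M}$ denotes non-increasing $M$-vectors with entries in $\mathcal B$. In round $t$ the competing bids are $\bm b^t_-=(b^t_{-1}\le\dots\le b^t_{-\overline M})$, $\overline M\ge M$, and bidding $\bm b$ yields $\mu^t(\bm b)=\sum_m(v_m-b_m)\mathbf 1_{b_m\ge b^t_{-m}}$. Full information: the agent observes $\bm b^t_-$ after round $t$; bandit: it only observes its allocation. $\textsc{Regret}_{\mathcal B}=\max_{\bm b\in\mathcal B^{+M},b_m\le v_m}\sum_t\mu^t(\bm b)-\mathbb E[\sum_t\mu^t(\bm b^t)]$, where $\bm b^t$ is the algorithm's bid in round $t$; the expectation is also over the random competing bids. *)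

(* Defs.v *)
From HB Require Import structures.
From mathcomp Require Import all_boot all_order all_algebra.
From mathcomp Require Import reals.
From Stdlib Require List.
Set Implicit Arguments. Unset Strict Implicit. Unset Printing Implicit Defensive.
Import Order.TTheory GRing.Theory Num.Theory.
Local Open Scope ring_scope.

Section Auction.
Variable R : realType.

(* Vectors (bids, valuations, competing bids) are sequences of reals,
   indexed from 0: entry m (0-based) is the (m+1)-th coordinate. *)

Definition in01 (x : R) : bool := (0 <= x) && (x <= 1).

Definition grid_ok (B : seq R) : bool := all in01 B.

Definition bidvec (B : seq R) (M : nat) (b : seq R) : bool :=
  [&& size b == M, all (fun x => x \in B) b & sorted >=%R b].

Definition valuation_ok (M : nat) (v : seq R) : bool :=
  [&& size v == M, all in01 v & sorted >=%R v].

Definition compvec (Mbar : nat) (c : seq R) : bool :=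
  [&& size c == Mbar, all in01 c & sorted <=%R c].

Definition util (M : nat) (v b c : seq R) : R :=
  \sum_(m < M) (nth 0 v m - nth 0 b m) * (if nth 0 c m <= nth 0 b m then 1 else 0).

Definition alloc (M : nat) (b c : seq R) : seq R :=
  [seq (if nth 0 c m <= nth 0 b m then 1 else 0) | m <- iota 0 M].

Fixpoint tuples_of (B : seq R) (n : nat) : seq (seq R) :=
  if n is n'.+1 then [seq x :: s | x <- B, s <- tuples_of B n'] else [:: [::]].

Definition comparator (B : seq R) (M : nat) (v b : seq R) : bool :=
  bidvec B M b && all (fun m => nth 0 b m <= nth 0 v m) (iota 0 M).

Definition comparators (B : seq R) (M : nat) (v : seq R) : seq (seq R) :=
  [seq b <- tuples_of B M | comparator B M v b].

(* A sequence of competing bid vectors: round t (0-based, t < T) uses s t. *)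
Definition bidseq := nat -> seq R.

(* best fixed comparator in hindsight: max_b sum_{t<T} mu^t(b)
   (the comparator class will be required nonempty, and every comparator has
   nonnegative utility, so the default 0 is harmless). *)
Definition opt (B : seq R) (M T : nat) (v : seq R) (s : bidseq) : R :=
  \big[Num.max/0]_(b <- comparators B M v) \sum_(t < T) util M v b (s t).

(* A (possibly randomized) bidding algorithm, in behavioral form: in round t,
   given the history of (own bid, feedback) pairs of the previous rounds, it
   outputs a finitely supported distribution over bids, as a list of
   (probability, bid) pairs. *)
Definition history := seq (seq R * seq R).
Definition policy := nat -> history -> seq (R * seq R).

Definition policy_ok (B : seq R) (M : nat) (pol : policy) : Prop :=
  forall t h, [/\ all (fun pb => 0 <= pb.1) (pol t h),
                  \sum_(pb <- pol t h) pb.1 = 1 &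
                  all (fun pb => bidvec B M pb.2) (pol t h)].

Definition feedback := seq R -> seq R -> seq R.
Definition full_info : feedback := fun b c => c.
Definition bandit (M : nat) : feedback := fun b c => alloc M b c.

(* expected total utility of the algorithm over rounds t, t+1, ..., t+n-1,
   given the realised competing bids s and the history h so far *)
Fixpoint alg_value (M : nat) (v : seq R) (pol : policy) (fb : feedback)
    (s : bidseq) (t n : nat) (h : history) : R :=
  if n is n'.+1 then
    \sum_(pb <- pol t h)
       pb.1 * (util M v pb.2 (s t)
               + alg_value M v pol fb s t.+1 n' (rcons h (pb.2, fb pb.2 (s t))))
  else 0.

(* A finitely supported distribution over sequences of competing bid vectors:
   list of (probability, sequence) pairs. *)
Definition dist_ok (Mbar T : nat) (D : seq (R * bidseq)) : Prop :=
  [/\ all (fun d => 0 <= d.1) D,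
      \sum_(d <- D) d.1 = 1 &
      forall d, Stdlib.Lists.List.In d D -> forall t, (t < T)%N -> compvec Mbar (d.2 t)].

Definition regret (B : seq R) (M T : nat) (v : seq R) (D : seq (R * bidseq))
    (pol : policy) (fb : feedback) : R :=
  \sum_(d <- D) d.1 * (opt B M T v d.2 - alg_value M v pol fb d.2 0 T [::]).

End Auction.

(* Main.v *)
Require Import Defs.
From HB Require Import structures.
From mathcomp Require Import all_boot all_order all_algebra.
From mathcomp Require Import reals.
From mathcomp Require Import lra zify ring.
Import Order.TTheory GRing.Theory Num.Theory.
Local Open Scope ring_scope.

Fixpoint bits (n : nat) : seq (seq bool) :=
  if n is n'.+1 then map (cons true) (bits n') ++ map (cons false) (bits n')
  else [:: [::]].

Lemma size_bits n : size (bits n) = (2 ^ n)%N.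
Proof. elim: n => [|n IH] //=; rewrite size_cat !size_map IH expnS; lia. Qed.

Lemma sum_bits (R : realType) n (F : seq bool -> R) :
  \sum_(l <- bits n.+1) F l = \sum_(l <- bits n) (F (true :: l) + F (false :: l)).
Proof. by rewrite /= big_cat !big_map big_split. Qed.

Lemma bits_size n l : l \in bits n -> size l = n.
Proof.
elim: n l => [|n IH] l /=; first by rewrite inE => /eqP ->.
by rewrite mem_cat => /orP [] /mapP [l' /IH <- ->].
Qed.

Definition sgn (R : realType) (b : bool) : R := if b then 1 else -1.
Definition Z (R : realType) (l : seq bool) : R := \sum_(b <- l) sgn R b.

Lemma moments (R : realType) n :
  [/\ \sum_(l <- bits n) Z R l = 0,
      \sum_(l <- bits n) Z R l ^+ 2 = n%:R * (2 ^ n)%:R,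
      \sum_(l <- bits n) Z R l ^+ 3 = 0 &
      \sum_(l <- bits n) Z R l ^+ 4 = (3 * n%:R ^+ 2 - 2 * n%:R) * (2 ^ n)%:R].
Proof.
elim: n => [|n [IH1 IH2 IH3 IH4]].
  by rewrite /= !big_cons !big_nil /Z big_nil !expr0n /= !mulr0n !addr0 !mulr0 subrr mul0r.
have E l : Z R (true :: l) = 1 + Z R l /\ Z R (false :: l) = -1 + Z R l.
  by rewrite /Z !big_cons.
have K : \sum_(l <- bits n) (1 : R) = (2 ^ n)%:R.
  rewrite -size_bits; elim: (bits n) => [|a s IHs]; first by rewrite big_nil.
  by rewrite big_cons IHs /= -addn1 natrD addrC.
split; rewrite sum_bits.
- transitivity (\sum_(l <- bits n) (2 * Z R l)).
    by apply: eq_bigr => l _; case: (E l) => -> ->; ring.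
  by rewrite -mulr_sumr IH1 mulr0.
- transitivity (\sum_(l <- bits n) (2 * Z R l ^+ 2 + 2 * 1)).
    by apply: eq_bigr => l _; case: (E l) => -> ->; ring.
  rewrite big_split /= -!mulr_sumr IH2 K expnS natrM -addn1 natrD; ring.
- transitivity (\sum_(l <- bits n) (2 * Z R l ^+ 3 + 6 * Z R l)).
    by apply: eq_bigr => l _; case: (E l) => -> ->; ring.
  by rewrite big_split /= -!mulr_sumr IH3 IH1 !mulr0 addr0.
- transitivity (\sum_(l <- bits n) (2 * Z R l ^+ 4 + 12 * Z R l ^+ 2 + 2 * 1)).
    by apply: eq_bigr => l _; case: (E l) => -> ->; ring.
  rewrite !big_split /= -!mulr_sumr IH4 IH2 K expnS natrM -addn1 natrD; ring.
Qed.

Lemma pointwise (R : realType) (a z : R) : 0 < a ->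
  a ^+ 2 * z ^+ 2 <= a ^+ 3 * `|z| + z ^+ 4.
Proof.
move=> a0.
have -> : z ^+ 2 = `|z| ^+ 2 by rewrite real_normK // num_real.
have -> : z ^+ 4 = `|z| ^+ 4 by rewrite -[4%N]/(2 * 2)%N !exprM real_normK // num_real.
have w0 : 0 <= `|z| by [].
move: w0; set w := `|z| => w0.
case: (lerP w a) => h.
- have h1 : 0 <= a ^+ 2 * w * (a - w) by rewrite mulr_ge0 ?mulr_ge0 ?sqr_ge0 // ?subr_ge0 // ltW.
  have h2 : 0 <= w ^+ 4 by rewrite exprn_ge0.
  nra.
- have h1 : 0 <= w ^+ 2 * (w - a) * (w + a).
    apply: mulr_ge0; first apply: mulr_ge0; rewrite ?sqr_ge0 ?subr_ge0 ?ltW //.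
    idtac. lra.
  have h2 : 0 <= a ^+ 3 * w by rewrite mulr_ge0 // exprn_ge0 // ltW.
  nra.
Qed.

Lemma absZ_bound (R : realType) n : (1 <= n)%N ->
  Num.sqrt (n%:R : R) * (2 ^ n)%:R <= 8 * \sum_(l <- bits n) `|Z R l|.
Proof.
move=> n1.
have n0 : (0 : R) < n%:R by rewrite ltr0n.
set s := Num.sqrt (n%:R : R).
have s0 : 0 < s by rewrite sqrtr_gt0.
have ss : s ^+ 2 = n%:R by rewrite sqr_sqrtr // ltW.
set a := 2 * s.
have a0 : 0 < a by rewrite mulr_gt0.
have H : \sum_(l <- bits n) a ^+ 2 * Z R l ^+ 2 <=
         \sum_(l <- bits n) (a ^+ 3 * `|Z R l| + Z R l ^+ 4).
  by apply: ler_sum => l _; apply: pointwise.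
case: (moments R n) => _ M2 _ M4.
rewrite big_split /= -!mulr_sumr M2 M4 in H.
set P := ((2 ^ n)%:R : R) in H *.
set S := \sum_(l <- bits n) `|Z R l| in H *.
have P0 : 0 < P by rewrite /P ltr0n expn_gt0.
rewrite -ss in H.
have : s ^+ 2 * (s * P) <= s ^+ 2 * (8 * S).
  rewrite /a in H. nra.
by rewrite ler_pM2l // exprn_gt0.
Qed.

Definition Bg (R : realType) : seq R := [:: 0; 1/2].
Definition xb (R : realType) (b : bool) : R := if b then 0 else 1/2.
Definition sq (R : realType) (M t : nat) (l : seq bool) : bidseq R :=
  fun u => nseq M (xb R (nth false l (u - t))).

Lemma alg_ext (R : realType) M (v : seq R) pol fb n : forall t h (s s' : bidseq R),
  (forall u, (t <= u)%N -> s u = s' u) ->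
  alg_value M v pol fb s t n h = alg_value M v pol fb s' t n h.
Proof.
elim: n => [|n IH] t h s s' E //=.
apply: eq_bigr => pb _; rewrite E // (IH _ _ s s') //.
by move=> u tu; apply: E; apply: ltnW.
Qed.

Lemma util_avg (R : realType) M (b : seq R) : bidvec (Bg R) M b ->
  util M (nseq M 1) b (nseq M 0) + util M (nseq M 1) b (nseq M (1/2)) = M%:R.
Proof.
case/and3P => /eqP sb ab _.
rewrite /util -big_split /=.
have -> : (M%:R : R) = \sum_(m < M) (1 : R) by rewrite sumr_const card_ord.
apply: eq_bigr => m _.
have mM : (m < M)%N by [].
rewrite !nth_nseq mM.
have : nth 0 b m \in Bg R by apply: (allP ab); rewrite mem_nth // sb.
rewrite !inE => /orP [] /eqP ->.
- rewrite lexx; have -> : (1/2 <= (0:R)) = false by apply/negbTE; rewrite -ltNge; lra.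
  lra.
- have -> : (0 : R) <= 1/2 by lra.
  rewrite lexx; lra.
Qed.

Lemma alg_step (R : realType) M pol fb n t h b l :
  alg_value M (nseq M 1) pol fb (sq R M t (b :: l)) t n.+1 h =
  \sum_(pb <- pol t h) pb.1 * (util M (nseq M (1:R)) pb.2 (nseq M (xb R b)) +
     alg_value M (nseq M 1) pol fb (sq R M t.+1 l) t.+1 n
        (rcons h (pb.2, fb pb.2 (nseq M (xb R b))))).
Proof.
rewrite /=; apply: eq_bigr => pb _.
have E : sq R M t (b :: l) t = nseq M (xb R b) by rewrite /sq subnn.
rewrite E; congr (_ * (_ + _)); apply: alg_ext => u tu.
rewrite /sq; have -> : (u - t = (u - t.+1).+1)%N by lia.
by [].
Qed.

Lemma alg_avg (R : realType) M pol fb : policy_ok (Bg R) M pol -> forall n t h,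
  \sum_(l <- bits n) alg_value M (nseq M 1) pol fb (sq R M t l) t n h
    = (2 ^ n)%:R * (n%:R * M%:R / 2).
Proof.
move=> Hp; elim=> [|n IH] t h.
  by rewrite /= big_cons big_nil /= mul0r mul0r mulr0 addr0.
rewrite sum_bits.
under eq_bigr => l _ do rewrite !alg_step -big_split /=.
rewrite exchange_big /=.
case: (Hp t h) => _ Hs Hb.
transitivity (\sum_(pb <- pol t h) pb.1 * ((2 ^ n.+1)%:R * (n.+1%:R * M%:R / 2))).
  rewrite big_seq_cond [RHS]big_seq_cond; apply: eq_bigr => pb /andP [pin _].
  under eq_bigr => l _ do rewrite -mulrDr.
  rewrite -mulr_sumr; congr (_ * _).
  rewrite big_split /= !big_split /= !IH.
  have K : forall c : R, \sum_(l <- bits n) c = c * (2 ^ n)%:R.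
    move=> c; rewrite -size_bits; elim: (bits n) => [|a s IHs]; first by rewrite big_nil mulr0.
    by rewrite big_cons IHs /= -addn1 natrD mulrDr mulr1 addrC.
  rewrite !K.
  have U := @util_avg R M _ (allP Hb pb pin).
  rewrite expnS natrM -natr1.
  have -> : util M (nseq M 1) pb.2 (nseq M (1/2)) =
            M%:R - util M (nseq M 1) pb.2 (nseq M 0).
    rewrite -U; ring.
  by field.
by rewrite -mulr_suml Hs mul1r.
Qed.

Lemma sorted_nseq' (T : Type) (r : rel T) x n : r x x -> sorted r (nseq n x).
Proof. by move=> rxx; case: n => //= n; elim: n => //= n ->; rewrite rxx. Qed.

Lemma in_tuples (R : realType) (B b : seq R) : all (fun x => x \in B) b ->
  b \in tuples_of B (size b).
Proof.
elim: b => [|a b IH] /=; first by rewrite inE.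
by case/andP => aB /IH bt; apply: (allpairs_f (fun x s => x :: s) aB bt).
Qed.

Lemma le_bigmax_in (R : realType) (s : seq (seq R)) (F : seq R -> R) b :
  b \in s -> F b <= \big[Num.max/0]_(x <- s) F x.
Proof.
elim: s => [|a s IH] //=; rewrite inE big_cons => /orP [/eqP ->|/IH h].
  by rewrite le_max lexx.
by rewrite le_max h orbT.
Qed.

Lemma In_map' (A B : Type) (f : A -> B) (s : seq A) d :
  List.In d (map f s) -> exists x, d = f x.
Proof. by elim: s => //= a s IH [<-|/IH]; [exists a|]. Qed.

Lemma sum_const_seq (R : realType) (A : eqType) (s : seq A) (c : R) :
  \sum_(l <- s) c = c * (size s)%:R.
Proof.
elim: s => [|a s IHs]; first by rewrite big_nil mulr0.
by rewrite big_cons IHs /= -addn1 natrD mulrDr mulr1 addrC.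
Qed.

Lemma util_const (R : realType) M (a x : R) :
  util M (nseq M 1) (nseq M a) (nseq M x) = M%:R * ((1 - a) * (if x <= a then 1 else 0)).
Proof.
rewrite /util.
under eq_bigr => m _ do rewrite !nth_nseq ltn_ord.
by rewrite sumr_const card_ord mulr_natl.
Qed.

Lemma comp_in (R : realType) M (a : R) : a \in Bg R -> a <= 1 ->
  nseq M a \in comparators (Bg R) M (nseq M 1).
Proof.
move=> aB a1; rewrite mem_filter; apply/andP; split.
  rewrite /comparator /bidvec size_nseq eqxx all_nseq aB orbT sorted_nseq' //=.
  by apply/allP => m; rewrite mem_iota => /andP [_ mM]; rewrite !nth_nseq mM.
have := @in_tuples R (Bg R) (nseq M a); rewrite size_nseq; apply.
by rewrite all_nseq aB orbT.
Qed.

Lemma Z_nth (R : realType) T l : size l = T ->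
  Z R l = \sum_(t < T) sgn R (nth false l t).
Proof. by move=> sl; rewrite /Z (big_nth false) sl big_mkord. Qed.

Lemma opt_bound (R : realType) M T l : size l = T ->
  M%:R * T%:R / 2 + M%:R * (Z R l + `|Z R l|) / 4
    <= opt (Bg R) M T (nseq M 1) (sq R M 0 l).
Proof.
move=> sl.
have h0 : (0:R) \in Bg R by rewrite !inE eqxx.
have h1 : (1/2:R) \in Bg R by rewrite !inE eqxx orbT.
have Flo := @le_bigmax_in R _ (fun b => \sum_(t < T) util M (nseq M 1) b (sq R M 0 l t))
   _ (@comp_in R M 0 h0 ler01).
have Fhi := @le_bigmax_in R _ (fun b => \sum_(t < T) util M (nseq M 1) b (sq R M 0 l t))
   _ (@comp_in R M (1/2) h1 ltac:(lra)).
rewrite -/(opt _ _ _ _ _) /= in Flo Fhi.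
have Elo : \sum_(t < T) util M (nseq M 1) (nseq M 0) (sq R M 0 l t)
   = M%:R / 2 * Z R l + M%:R / 2 * T%:R :> R.
  have -> : (T%:R:R) = \sum_(t < T) 1 by rewrite sumr_const card_ord.
  rewrite (@Z_nth R T l sl) !mulr_sumr -big_split /=.
  apply: eq_bigr => t _; rewrite /sq util_const subn0 /xb /sgn; case: (nth false l t).
    rewrite lexx; by field.
  have -> : (1/2 <= (0:R)) = false by apply/negbTE; rewrite -ltNge; lra.
  by field.
have Ehi : \sum_(t < T) util M (nseq M 1) (nseq M (1/2)) (sq R M 0 l t)
   = M%:R / 2 * T%:R :> R.
  have -> : (T%:R:R) = \sum_(t < T) 1 by rewrite sumr_const card_ord.
  rewrite mulr_sumr.
  apply: eq_bigr => t _; rewrite /sq util_const subn0 /xb; case: (nth false l t).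
    have -> : (0:R) <= 1/2 by lra.
    by field.
  rewrite lexx; by field.
rewrite Elo in Flo; rewrite Ehi in Fhi.
set o := opt _ _ _ _ _ in Flo Fhi *.
have M0 : (0:R) <= M%:R by [].
case: (lerP 0 (Z R l)) => hz.
  rewrite ger0_norm //.
  have -> : M%:R * T%:R / 2 + M%:R * (Z R l + Z R l) / 4 = M%:R / 2 * Z R l + M%:R / 2 * T%:R.
    by field.
  by [].
rewrite ltr0_norm // subrr mulr0 mul0r addr0.
by have -> : M%:R * T%:R / 2 = M%:R / 2 * T%:R :> R by field.
Qed.

Lemma regret_bound (R : realType) M T pol fb : (1 <= T)%N ->
  policy_ok (Bg R) M pol ->
  1/32 * M%:R * Num.sqrt T%:R <=
  regret (Bg R) M T (nseq M 1)
    [seq (((2 ^ T)%:R : R)^-1, sq R M 0 l) | l <- bits T] pol fb.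
Proof.
move=> T1 Hp.
rewrite /regret big_map /=.
set p := ((2 ^ T)%:R : R)^-1.
have P0 : (0:R) < (2 ^ T)%:R by rewrite ltr0n expn_gt0.
rewrite -mulr_sumr sumrB (@alg_avg R M pol fb Hp T 0 [::]).
have Ho : \sum_(l <- bits T) (M%:R * T%:R / 2 + M%:R * (Z R l + `|Z R l|) / 4)
   <= \sum_(l <- bits T) opt (Bg R) M T (nseq M 1) (sq R M 0 l).
  rewrite big_seq_cond [X in _ <= X]big_seq_cond; apply: ler_sum => l /andP [lin _].
  by apply: opt_bound; apply: bits_size.
move: Ho; rewrite big_split /= sum_const_seq size_bits -mulr_suml -mulr_sumr big_split /= => Ho.
case: (moments R T) => M1 _ _ _.
rewrite M1 add0r in Ho.
have HZ := @absZ_bound R T T1.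
set S := \sum_(l <- bits T) `|Z R l| in Ho HZ.
set O := \sum_(l <- bits T) opt _ _ _ _ _ in Ho *.
set Q := ((2 ^ T)%:R : R) in P0 p Ho HZ *.
have M0 : (0:R) <= M%:R by [].
have : M%:R * (Num.sqrt T%:R * Q) <= M%:R * (8 * S) by rewrite ler_wpM2l.
move=> HZ'.
have E : 1 / 32 * M%:R * Num.sqrt T%:R = p * (M%:R * (Num.sqrt T%:R * Q) / 32).
  rewrite /p; field; by rewrite lt0r_neq0.
rewrite E; apply: ler_wpM2l; first by rewrite /p invr_ge0 ltW.
lra.
Qed.

Theorem theorem7 (R : realType) :
  exists c : R, 0 < c /\
  forall M T : nat, (1 <= M)%N -> (1 <= T)%N ->
  exists (Mbar : nat) (B : seq R) (v : seq R) (D : seq (R * bidseq R)),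
    [/\ (M <= Mbar)%N, grid_ok B, valuation_ok M v,
        comparators B M v != [::] & dist_ok Mbar T D] /\
    ((forall pol : policy R, policy_ok B M pol ->
           c * M%:R * Num.sqrt T%:R <= regret B M T v D pol (@full_info R))
     /\ (forall pol : policy R, policy_ok B M pol ->
           c * M%:R * Num.sqrt T%:R <= regret B M T v D pol (@bandit R M))).
Proof.
exists (1/32); split; first lra.
move=> M T M1 T1.
exists M, (Bg R), (nseq M 1),
  [seq (((2 ^ T)%:R : R)^-1, sq R M 0 l) | l <- bits T].
have h01 : (0:R) <= 1/2 by lra.
have h12 : (1/2:R) <= 1 by lra.
have i01 : forall x : R, x \in Bg R -> in01 x.
  by move=> x; rewrite !inE => /orP [] /eqP -> ; rewrite /in01 ?lexx ?ler01 ?h01 ?h12.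
have P0 : (0:R) < (2 ^ T)%:R by rewrite ltr0n expn_gt0.
split; last by split=> pol Hp; apply: regret_bound.
split => //.
- by rewrite /grid_ok; apply/allP => x /i01.
- rewrite /valuation_ok size_nseq eqxx all_nseq /in01 lexx ler01 orbT /=; apply: sorted_nseq'; exact: lexx.
- have := @comp_in R M 0 ltac:(by rewrite !inE eqxx) ler01.
  by case: (comparators _ _ _).
- split.
  + rewrite all_map; apply/allP => l _ /=; by rewrite invr_ge0 ltW.
  + by rewrite big_map sum_const_seq size_bits mulVf // lt0r_neq0.
  + move=> d Hd t _; case: (@In_map' _ _ _ _ _ Hd) => l -> /=.
    rewrite /sq /compvec size_nseq eqxx all_nseq i01 ?orbT ?sorted_nseq' //.
    by rewrite /xb; case: (nth _ _ _); rewrite !inE eqxx ?orbT.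
Qed.
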